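(* Let $tn=(T,\prec^+,\alpha)$ be a task network in a domain $D$ with $C_d\neq\infty$. Then $tn$ can be decomposed into at most $C_c^{\sum_{i=0}^{C_d-1} C_\#\cdot C_s^i}$ pairwise non-isomorphic primitive task networks $tn'=(T',\prec'^+,\alpha')$, and each of these satisfies $|T'|\le |T|+C_\#\cdot(C_s^{C_d}-1)$.
   Context: An HTN domain is $D=(F,A,\mathcal{C},\delta,M)$ with propositions $F$, actions $A$, compound task names $\mathcal{C}$ ($A\cap\mathcal{C}=\emptyset$), action semantics $\delta$, and decomposition methods $M$, a set of pairs $(c,tn_m)$ with $c\in\mathcal{C}$ and $tn_m$ a task network. A task network is $(T,\prec^+,\alpha)$ with $T$ a finite set of tasks, $\prec^+$ a strict partial order on $T$, $\alpha:T\to A\cup\mathcal{C}$; a task $t$ is compound if $\alpha(t)\in\mathcal{C}$, and the network is primitive if it has no compound tasks. Decomposing a compound task $t$ via a method $(\alpha(t),tn_m)\in M$ replaces $t$ by the tasks of $tn_m$ (ordered among themselves as in $tn_m$), each related to the other tasks exactly as $t$ was. Measures: $C_\#=|\{t\in T:\alpha(t)\in\mathcal{C}\}|$ is the number of compound tasks in $tn$; $C_s=\max\{|T_m| : (c,(T_m,\prec^+_m,\alpha_m))\in M\}$; $C_c=\max_{c\in\mathcal{C}}|\{tn_m : (c,tn_m)\in M\}|$, the maximum number of pairwise non-isomorphic networks a compound task can be decomposed into; $C_d$ is defined recursively: $C_d=0$ for primitive networks, and a network has $C_d=i$ if $i$ is the smallest integer such that every decomposition of all compound tasks of the network results in a network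 with $C_d\le i-1$; $C_d=\infty$ if no such $i$ exists. *)

(* Defs.v *)
From mathcomp Require Import all_boot all_order all_algebra.
From Stdlib Require Import ClassicalEpsilon.
Set Implicit Arguments. Unset Strict Implicit. Unset Printing Implicit Defensive.
Import Order.TTheory GRing.Theory Num.Theory.

(* Task names: actions A and compound task names C; the disjoint union A + C
   makes A ∩ C = ∅ automatic. Propositions and action semantics play no role
   in decomposition and the measures, so they are omitted. *)

(* A task network: finite set of task identifiers (a duplicate-free list of
   nats), an order relation prec (only its restriction to tasks matters),
   and a labelling alpha. *)
Record TN (A C : Type) := mkTN {
  tasks : seq nat;
  prec  : rel nat;
  lab   : nat -> A + C }.

Section HTN.
Variables (A C : eqType).
Implicit Types (tn : TN A C) (M : seq (C * TN A C)).

Definition wf tn : Prop :=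
  uniq (tasks tn) /\
  {in tasks tn, forall x, ~~ prec tn x x} /\
  {in tasks tn & &, forall x y z, prec tn x y -> prec tn y z -> prec tn x z}.

Definition is_compound (l : A + C) : bool := if l is inr _ then true else false.

Definition compound_tasks tn : seq nat :=
  [seq x <- tasks tn | is_compound (lab tn x)].

Definition Cnum tn : nat := size (compound_tasks tn).

Definition primitive tn : bool := all (fun x => ~~ is_compound (lab tn x)) (tasks tn).

Definition iso (tn1 tn2 : TN A C) : Prop :=
  exists f : nat -> nat,
    {in tasks tn1 &, injective f} /\
    perm_eq (map f (tasks tn1)) (tasks tn2) /\
    {in tasks tn1, forall x, lab tn2 (f x) = lab tn1 x} /\
    {in tasks tn1 &, forall x y, prec tn2 (f x) (f y) = prec tn1 x y}.

Definition Cs M : nat := \max_(m <- M) size (tasks m.2).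

Fixpoint iso_reps (s : seq (TN A C)) : seq (TN A C) :=
  match s with
  | [::] => [::]
  | x :: s' =>
      let r := iso_reps s' in
      if excluded_middle_informative (exists y, List.In y r /\ iso x y)
      then r else x :: r
  end.

Definition nclasses (s : seq (TN A C)) : nat := size (iso_reps s).

Definition Cc M : nat :=
  \max_(mc <- M) nclasses [seq m.2 | m <- M & m.1 == mc.1].

Definition step M tn (t : nat) (tn' : TN A C) : Prop :=
  exists (c : C) (m : TN A C) (f : nat -> nat),
    [/\ t \in tasks tn, lab tn t = inr c, List.In (c, m) M,
        {in tasks m &, injective f} &
        {in tasks m, forall x, f x \notin [seq y <- tasks tn | y != t]}] /\
    [/\ perm_eq (tasks tn') ([seq y <- tasks tn | y != t] ++ map f (tasks m)),
        {in [seq y <- tasks tn | y != t], forall y, lab tn' y = lab tn y} /\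
          {in tasks m, forall x, lab tn' (f x) = lab m x},
        {in [seq y <- tasks tn | y != t] &, forall x y, prec tn' x y = prec tn x y} &
        {in tasks m &, forall x y, prec tn' (f x) (f y) = prec m x y}] /\
    {in tasks m & [seq y <- tasks tn | y != t], forall x y,
        prec tn' (f x) y = prec tn t y /\ prec tn' y (f x) = prec tn y t}.

Inductive reach M : TN A C -> TN A C -> Prop :=
  | reach0 tn : reach M tn tn
  | reachS tn t tn1 tn2 : step M tn t tn1 -> reach M tn1 tn2 -> reach M tn tn2.

Definition decomposes_to M tn tn' : Prop := reach M tn tn' /\ primitive tn'.

Inductive levelR M : seq nat -> TN A C -> TN A C -> Prop :=
  | levelR0 tn : levelR M [::] tn tn
  | levelRS t S tn tn1 tn2 :
      step M tn t tn1 -> levelR M S tn1 tn2 -> levelR M (t :: S) tn tn2.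

Definition level M tn tn' : Prop := levelR M (compound_tasks tn) tn tn'.

(* Dle M tn i  <->  C_d(tn) <= i *)
Fixpoint Dle M tn (i : nat) : Prop :=
  match i with
  | 0 => primitive tn
  | i'.+1 => forall tn', level M tn tn' -> Dle M tn' i'
  end.

(* C_d(tn) = d (in particular C_d(tn) <> infinity) *)
Definition is_Cd M tn (d : nat) : Prop :=
  Dle M tn d /\ forall j, j < d -> ~ Dle M tn j.

Definition pairwise_noniso (s : seq (TN A C)) : Prop :=
  forall s1 s2 s3 x y, s = s1 ++ x :: s2 ++ y :: s3 -> ~ iso x y.

End HTN.

(* Main.v *)
Require Import Defs.
From mathcomp Require Import all_boot all_order all_algebra.
From mathcomp Require Import zify.
From Stdlib Require Import ClassicalEpsilon.
Import Order.TTheory GRing.Theory Num.Theory.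
Set Implicit Arguments. Unset Strict Implicit. Unset Printing Implicit Defensive.


Lemma uniq_map_inj (T1 T2 : eqType) (f : T1 -> T2) (s : seq T1) :
  uniq (map f s) -> {in s &, injective f}.
Proof.
elim: s => [|z s IH] //= /andP[Hz Hu] x y; rewrite !inE.
case/predU1P=> [->|Hx]; case/predU1P=> [->|Hy] //.
- by move=> E; move: Hz; rewrite E map_f.
- by move=> E; move: Hz; rewrite -E map_f.
- exact: IH.
Qed.

Definition sinv (f : nat -> nat) (s : seq nat) (y : nat) := nth 0 s (index y (map f s)).

Lemma sinv_mem f s y : y \in map f s -> sinv f s y \in s /\ f (sinv f s y) = y.
Proof.
move=> Hy; have Hi : index y (map f s) < size s by rewrite -(size_map f) index_mem.
split; first by rewrite /sinv mem_nth.
by rewrite /sinv -(nth_map 0 0) // nth_index.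
Qed.

Lemma sinvK f s x : {in s &, injective f} -> x \in s -> sinv f s (f x) = x.
Proof.
move=> Hinj Hx; have [H1 H2] := sinv_mem (map_f f Hx).
exact: Hinj.
Qed.

Section Basics.
Variables (A C : eqType).
Notation TNt := (TN A C).

Definition isow (f : nat -> nat) (a b : TNt) :=
  {in tasks a &, injective f} /\ perm_eq (map f (tasks a)) (tasks b) /\
  {in tasks a, forall x, lab b (f x) = lab a x} /\
  {in tasks a &, forall x y, prec b (f x) (f y) = prec a x y}.

Lemma isoP (a b : TNt) : iso a b <-> exists f, isow f a b.
Proof. by []. Qed.

Lemma iso_refl (a : TNt) : iso a a.
Proof. by exists id; split=> //; split; [rewrite map_id|]. Qed.

Lemma isow_mem f (a b : TNt) x : isow f a b -> x \in tasks a -> f x \in tasks b.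
Proof. by case=> _ [Hp _] Hx; rewrite -(perm_mem Hp) map_f. Qed.

Lemma iso_sym (a b : TNt) : iso a b -> iso b a.
Proof.
case=> f [Hi [Hp [Hl Hpr]]].
have Hm y : y \in tasks b -> y \in map f (tasks a) by rewrite (perm_mem Hp).
exists (sinv f (tasks a)); split; [|split; [|split]].
- move=> x y /Hm Hx /Hm Hy E.
  by rewrite -(sinv_mem Hx).2 -(sinv_mem Hy).2 E.
- have E : map (sinv f (tasks a) \o f) (tasks a) = tasks a.
    by rewrite -[RHS]map_id; apply/eq_in_map => x Hx; exact: sinvK.
  by rewrite -{2}E map_comp; apply: perm_map; rewrite perm_sym.
- move=> y /Hm Hy; have [H1 H2] := sinv_mem Hy.
  by rewrite -Hl // H2.
- move=> x y /Hm Hx /Hm Hy; have [H1 H2] := sinv_mem Hx; have [H3 H4] := sinv_mem Hy.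
  by rewrite -Hpr // H2 H4.
Qed.

Lemma iso_trans (a b c : TNt) : iso a b -> iso b c -> iso a c.
Proof.
case=> f Hf; case=> g Hg.
have Hmf := isow_mem Hf.
case: Hf => [Hi [Hp [Hl Hpr]]]; case: Hg => [Gi [Gp [Gl Gpr]]].
exists (g \o f); split; [|split; [|split]].
- by move=> x y Hx Hy /= /Gi E; apply: Hi => //; apply: E; apply: Hmf.
- by rewrite map_comp (perm_trans (perm_map g Hp)).
- by move=> x Hx /=; rewrite Gl ?Hl // Hmf.
- by move=> x y Hx Hy /=; rewrite Gpr ?Hpr // Hmf.
Qed.

Lemma iso_size (a b : TNt) : iso a b -> size (tasks a) = size (tasks b).
Proof. by case=> f [_ [Hp _]]; rewrite -(perm_size Hp) size_map. Qed.

Lemma iso_uniq (a b : TNt) : iso a b -> uniq (tasks a) -> uniq (tasks b).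
Proof. by case=> f [Hi [Hp _]] Hu; rewrite -(perm_uniq Hp) map_inj_in_uniq. Qed.

Lemma iso_primitive (a b : TNt) : iso a b -> primitive a -> primitive b.
Proof.
case=> f [Hi [Hp [Hl _]]] /allP Ha; apply/allP => y.
rewrite -(perm_mem Hp) => /mapP[x Hx ->]; rewrite Hl //; exact: Ha.
Qed.

End Basics.


Section Steps.
Variables (A C : eqType) (M : seq (C * TN A C)).
Hypothesis wfM : forall m, List.In m M -> wf m.2.
Notation TNt := (TN A C).

Definition stepw (a : TNt) t (b : TNt) (c : C) (m : TNt) (f : nat -> nat) :=
    [/\ t \in tasks a, lab a t = inr c, List.In (c, m) M,
        {in tasks m &, injective f} &
        {in tasks m, forall x, f x \notin [seq y <- tasks a | y != t]}] /\
    [/\ perm_eq (tasks b) ([seq y <- tasks a | y != t] ++ map f (tasks m)),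
        {in [seq y <- tasks a | y != t], forall y, lab b y = lab a y} /\
          {in tasks m, forall x, lab b (f x) = lab m x},
        {in [seq y <- tasks a | y != t] &, forall x y, prec b x y = prec a x y} &
        {in tasks m &, forall x y, prec b (f x) (f y) = prec m x y}] /\
    {in tasks m & [seq y <- tasks a | y != t], forall x y,
        prec b (f x) y = prec a t y /\ prec b y (f x) = prec a y t}.

Lemma stepP a t b : step M a t b <-> exists c m f, stepw a t b c m f.
Proof. by []. Qed.

Lemma stepw_uniq a t b c m f : uniq (tasks a) -> stepw a t b c m f -> uniq (tasks b).
Proof.
move=> Hu [[Ht Hl Hin Hinj Hfr] [[Hp _ _ _] _]].
rewrite (perm_uniq Hp) cat_uniq filter_uniq //= map_inj_in_uniq //.
rewrite (proj1 (wfM Hin)) andbT; apply/hasP => -[y /mapP[x Hx ->]] Hy.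
by move: (Hfr x Hx); rewrite Hy.
Qed.

Lemma step_uniq a t b : uniq (tasks a) -> step M a t b -> uniq (tasks b).
Proof. by move=> Hu [c [m [f H]]]; apply: stepw_uniq H. Qed.

Lemma step_keep a t b y : step M a t b -> y \in tasks a -> y != t ->
  y \in tasks b /\ lab b y = lab a y.
Proof.
move=> [c [m [f [_ [[Hp [Hlo _] _ _] _]]]]] Hy Hyt.
have Ho : y \in [seq y <- tasks a | y != t] by rewrite mem_filter Hyt.
by rewrite (perm_mem Hp) mem_cat Ho Hlo.
Qed.

Lemma step_t a t b : step M a t b -> t \in tasks a /\ is_compound (lab a t).
Proof. by move=> [c [m [f [[Ht Hl _ _ _] _]]]]; rewrite Hl. Qed.

Lemma stepw_mem a t b c m f y : stepw a t b c m f -> y \in tasks b ->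
  (y \in [seq y <- tasks a | y != t]) \/ (exists2 x, x \in tasks m & y = f x).
Proof.
move=> [_ [[Hp _ _ _] _]]; rewrite (perm_mem Hp) mem_cat => /orP[H|/mapP[x Hx ->]].
by left. by right; exists x.
Qed.

Lemma core g a a' t b b' c1 m1 f1 c2 m2 f2 h :
  isow g a a' -> isow h m1 m2 -> uniq (tasks b') ->
  stepw a t b c1 m1 f1 -> stepw a' (g t) b' c2 m2 f2 -> iso b b'.
Proof.
move=> Hg Hh Hub' S1 S2.
have Hgm := isow_mem Hg; have Hhm := isow_mem Hh.
case: Hg => [Gi [Gp [Gl Gpr]]]; case: Hh => [Hi [Hp [Hl Hpr]]].
have Hmem1 := stepw_mem S1.
case: S1 => [[Ht Hlt Hin Hinj Hfr] [[Hp1 [Hlo Hln] Hpo Hpn] X1]].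
case: S2 => [[Ht' Hlt' Hin' Hinj' Hfr'] [[Hp1' [Hlo' Hln'] Hpo' Hpn'] X2]].
set old := [seq y <- tasks a | y != t] in Hfr Hp1 Hlo Hpo X1 Hmem1.
set old' := [seq y <- tasks a' | y != g t] in Hfr' Hp1' Hlo' Hpo' X2.
pose phi := fun y : nat => if y \in [seq f1 x | x <- tasks m1] then f2 (h (sinv f1 (tasks m1) y)) else g y.
have F1 y : y \in old -> [/\ phi y = g y, g y \in old' & y \in tasks a].
  move=> Hy; have HyA : y \in tasks a by move: Hy; rewrite mem_filter => /andP[].
  have Hyt : y != t by move: Hy; rewrite mem_filter => /andP[].
  split=> //; last first.
    rewrite mem_filter Hgm // andbT; apply: contra Hyt => /eqP E.
    by apply/eqP; apply: Gi.
  rewrite /phi; case: ifP => // /mapP[x Hx Ex].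
  by move: (Hfr x Hx); rewrite -Ex Hy.
have F2 x : x \in tasks m1 -> phi (f1 x) = f2 (h x) /\ h x \in tasks m2.
  by move=> Hx1; split; [rewrite /phi map_f // sinvK | apply: Hhm].
have Hperm : perm_eq (map phi (tasks b)) (tasks b').
  apply: (perm_trans (perm_map phi Hp1)); rewrite perm_sym.
  apply: (perm_trans Hp1'); rewrite map_cat; apply: perm_cat.
  - have -> : map phi old = map g old.
      by apply/eq_in_map => y /F1[].
    rewrite perm_sym.
    have G0 : perm_eq (tasks a') (map g (tasks a)) by rewrite perm_sym.
    have G2 := perm_filter (fun y => y != g t) G0.
    rewrite perm_sym; apply: (perm_trans G2).
    rewrite filter_map.
    have -> : [seq y <- tasks a | preim g (fun y => y != g t) y] = old.
      apply: eq_in_filter => y Hy /=.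
      apply/idP/idP; apply: contra => /eqP E; apply/eqP; first by rewrite E.
      exact: Gi.
    by [].
  - rewrite perm_sym -map_comp.
    have -> : map (phi \o f1) (tasks m1) = map f2 (map h (tasks m1)).
      by rewrite -map_comp; apply/eq_in_map => x /F2[].
    by rewrite perm_sym; apply: perm_map; rewrite perm_sym.
exists phi; split; [|split; [exact: Hperm|split]].
- by apply: uniq_map_inj; rewrite (perm_uniq Hperm).
- move=> y /Hmem1 [Hy|[x Hx ->]].
  + by case: (F1 y Hy) => -> H1 H2; rewrite Hlo' // Hlo // Gl.
  + by case: (F2 x Hx) => -> H1; rewrite Hln' // Hln // Hl.
- move=> y z /Hmem1 [Hy|[x Hx ->]] /Hmem1 [Hz|[x' Hx' ->]].
  + case: (F1 y Hy) => -> H1 H2; case: (F1 z Hz) => -> H3 H4.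
    by rewrite Hpo' // Hpo // Gpr.
  + case: (F1 y Hy) => -> H1 H2; case: (F2 x' Hx') => -> H3.
    by rewrite (X2 _ _ H3 H1).2 (X1 _ _ Hx' Hy).2 Gpr.
  + case: (F2 x Hx) => -> H1; case: (F1 z Hz) => -> H3 H4.
    by rewrite (X2 _ _ H1 H3).1 (X1 _ _ Hx Hz).1 Gpr.
  + case: (F2 x Hx) => -> H1; case: (F2 x' Hx') => -> H3.
    by rewrite Hpn' // Hpn // Hpr.
Qed.


Lemma isow_id (a : TNt) : isow id a a.
Proof. by split=> //; split; [rewrite map_id|]. Qed.

Lemma step_exists a t c m : t \in tasks a -> lab a t = inr c -> List.In (c, m) M ->
  exists b f, stepw a t b c m f.
Proof.
move=> Ht Hl Hin.
set K := (\max_(y <- tasks a) y).+1.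
have HK y : y \in tasks a -> y < K.
  by move=> Hy; rewrite ltnS; apply: (@leq_bigmax_seq _ _ xpredT (fun y => y) y).
have HKo y : y \in [seq y <- tasks a | y != t] -> y < K.
  by rewrite mem_filter => /andP[_ /HK].
pose b := mkTN ([seq y <- tasks a | y != t] ++ map (addn K) (tasks m))
   (fun x y => if K <= x then (if K <= y then prec m (x - K) (y - K) else prec a t y)
               else (if K <= y then prec a x t else prec a x y))
   (fun y => if K <= y then lab m (y - K) else lab a y).
exists b, (addn K); split; [|split].
- split=> //; first by move=> x y _ _; apply: addnI.
  move=> x _; apply/negP => /HKo; rewrite ltnNge; apply/negP/negPn; exact: leq_addr.
- split.
  + exact: perm_refl.
  + rewrite /b /=; split=> [y /HKo HyK|x _]; first by rewrite leqNgt HyK.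
    by rewrite leq_addr addKn.
  + by move=> x y /HKo Hx /HKo Hy; rewrite /b /= leqNgt Hx leqNgt Hy.
  + by move=> x y _ _; rewrite /b /= !leq_addr !addKn.
- by move=> x y _ /HKo Hy; rewrite /b /= leq_addr leqNgt Hy.
Qed.

Lemma step_transfer g a a' t b : isow g a a' -> uniq (tasks a') -> step M a t b ->
  exists b', step M a' (g t) b' /\ iso b b'.
Proof.
move=> Hg Hu [c [m [f S]]].
have Hgt : lab a' (g t) = inr c.
  case: Hg => _ [_ [Gl _]]; case: S => [[Ht Hl _ _ _] _]; by rewrite Gl.
have Htm : g t \in tasks a' by apply: (isow_mem Hg); case: S => [[]].
have Hin : List.In (c, m) M by case: S => [[]].
have [b' [f' Sb]] := step_exists Htm Hgt Hin.
exists b'; split; first by exists c, m, f'.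
exact: (core Hg (isow_id m) (stepw_uniq Hu Sb) S Sb).
Qed.

Lemma reach_transfer a a' y : iso a a' -> uniq (tasks a') -> reach M a y ->
  exists y', reach M a' y' /\ iso y y'.
Proof.
move=> Hi Hu Hr; elim: Hr a' Hi Hu => [x|x t x1 x2 Hs Hr IH] a' Hi Hu.
  by exists a'; split=> //; exact: reach0.
case: Hi => g Hg.
have [x1' [Hs' Hi1]] := step_transfer Hg Hu Hs.
have [y' [Hr' Hy']] := IH x1' Hi1 (step_uniq Hu Hs').
by exists y'; split=> //; exact: reachS Hs' Hr'.
Qed.

End Steps.


Section Swap.
Variables (A C : eqType) (M : seq (C * TN A C)).
Notation TNt := (TN A C).

Lemma swap (a a1 b1 b c : TNt) u t cu mu fu ct mt ft ft' fu' :
  uniq (tasks c) -> t != u ->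
  stepw M a u a1 cu mu fu -> stepw M a1 t b1 ct mt ft ->
  stepw M a t b ct mt ft' -> stepw M b u c cu mu fu' -> iso b1 c.
Proof.
move=> Huc Htu Su St St' Su'.
case: Su => [[Hu_a Hlu Hinu Hinju Hfru] [[Hpu [Hlou Hlnu] Hpou Hpnu] Xu]].
case: St => [[Ht_a1 Hlt1 Hint Hinjt Hfrt] [[Hpt [Hlot Hlnt] Hpot Hpnt] Xt]].
case: St' => [[Ht_a _ _ Hinjt' Hfrt'] [[Hpt' [Hlot' Hlnt'] Hpot' Hpnt'] Xt']].
case: Su' => [[Hu_b _ _ Hinju' Hfru'] [[Hpu' [Hlou' Hlnu'] Hpou' Hpnu'] Xu']].
set oAu := [seq y <- tasks a | y != u] in Hfru Hpu Hlou Hpou Xu.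
set oA1t := [seq y <- tasks a1 | y != t] in Hfrt Hpt Hlot Hpot Xt.
set oAt := [seq y <- tasks a | y != t] in Hfrt' Hpt' Hlot' Hpot' Xt'.
set oBu := [seq y <- tasks b | y != u] in Hfru' Hpu' Hlou' Hpou' Xu'.
have HtAu : t \in oAu by rewrite mem_filter Htu.
have HuAt : u \in oAt by rewrite mem_filter eq_sym Htu.
pose phi := fun y : nat => if y \in [seq ft x | x <- tasks mt] then ft' (sinv ft (tasks mt) y)
   else if y \in [seq fu x | x <- tasks mu] then fu' (sinv fu (tasks mu) y) else y.
have FO y : y \in oAu -> y != t -> [/\ phi y = y, y \in oA1t, y \in oAt & y \in oBu].
  move=> Hy Hyt.
  have Hya : y \in tasks a by move: Hy; rewrite mem_filter => /andP[].
  have Hyu : y != u by move: Hy; rewrite mem_filter => /andP[].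
  have HA1 : y \in oA1t by rewrite mem_filter Hyt (perm_mem Hpu) mem_cat Hy.
  have HAt : y \in oAt by rewrite mem_filter Hyt Hya.
  split=> //; last by rewrite mem_filter Hyu (perm_mem Hpt') mem_cat HAt.
  rewrite /phi; case: ifP => [/mapP[x Hx Ex]|_].
    by move: (Hfrt x Hx); rewrite -Ex HA1.
  case: ifP => // /mapP[x Hx Ex].
  by move: (Hfru x Hx); rewrite -Ex Hy.
have FU x : x \in tasks mu -> phi (fu x) = fu' x /\ fu x \in oA1t.
  move=> Hx.
  have H1 : fu x \in oA1t.
    rewrite mem_filter (perm_mem Hpu) mem_cat map_f ?orbT // andbT.
    by apply: contra (Hfru x Hx) => /eqP ->.
  split=> //; rewrite /phi; case: ifP => [/mapP[x' Hx' Ex]|_].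
    by move: (Hfrt x' Hx'); rewrite -Ex H1.
  by rewrite map_f // sinvK.
have FT x : x \in tasks mt -> phi (ft x) = ft' x /\ ft' x \in oBu.
  move=> Hx; split; first by rewrite /phi map_f // sinvK.
  rewrite mem_filter (perm_mem Hpt') mem_cat map_f ?orbT // andbT.
  by apply: contra (Hfrt' x Hx) => /eqP ->.
have Hcl y : y \in tasks b1 -> [\/ y \in oAu /\ y != t,
   exists2 x, x \in tasks mu & y = fu x | exists2 x, x \in tasks mt & y = ft x].
  rewrite (perm_mem Hpt) mem_cat => /orP[|/mapP[x Hx ->]]; last by constructor 3; exists x.
  rewrite mem_filter => /andP[Hyt]; rewrite (perm_mem Hpu) mem_cat => /orP[Hy|/mapP[x Hx ->]].
    by constructor 1.
  by constructor 2; exists x.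
have Hperm : perm_eq (map phi (tasks b1)) (tasks c).
  have P1 : perm_eq (tasks b1)
      ([seq y <- oAu | y != t] ++ map fu (tasks mu) ++ map ft (tasks mt)).
    apply: (perm_trans Hpt); rewrite catA; apply: perm_cat => //.
    have E : [seq y <- map fu (tasks mu) | y != t] = map fu (tasks mu).
      apply/all_filterP/allP => y /mapP[x Hx ->].
      by apply: contra (Hfru x Hx) => /eqP ->.
    by rewrite -E -filter_cat; apply: perm_filter.
  have P2 : perm_eq (tasks c)
      ([seq y <- oAt | y != u] ++ map ft' (tasks mt) ++ map fu' (tasks mu)).
    apply: (perm_trans Hpu'); rewrite catA; apply: perm_cat => //.
    have E : [seq y <- map ft' (tasks mt) | y != u] = map ft' (tasks mt).
      apply/all_filterP/allP => y /mapP[x Hx ->].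
      by apply: contra (Hfrt' x Hx) => /eqP ->.
    by rewrite -E -filter_cat; apply: perm_filter.
  apply: (perm_trans (perm_map phi P1)); rewrite perm_sym; apply: (perm_trans P2).
  rewrite !map_cat.
  have -> : map phi [seq y <- oAu | y != t] = [seq y <- oAu | y != t].
    rewrite -[RHS]map_id; apply/eq_in_map => y; rewrite mem_filter => /andP[Hyt Hy].
    by case: (FO y Hy Hyt).
  have -> : map phi (map fu (tasks mu)) = map fu' (tasks mu).
    by rewrite -map_comp; apply/eq_in_map => x /FU[].
  have -> : map phi (map ft (tasks mt)) = map ft' (tasks mt).
    by rewrite -map_comp; apply/eq_in_map => x /FT[].
  have -> : [seq y <- oAt | y != u] = [seq y <- oAu | y != t].
    by rewrite /oAt /oAu -!filter_predI; apply: eq_filter => y /=; rewrite andbC.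
  by apply: perm_cat => //; rewrite perm_catC.
exists phi; split; [|split; [exact: Hperm|split]].
- by apply: uniq_map_inj; rewrite (perm_uniq Hperm).
- move=> y /Hcl [[Hy Hyt]|[x Hx ->]|[x Hx ->]].
  + case: (FO y Hy Hyt) => -> H1 H2 H3.
    by rewrite Hlou' // Hlot' // Hlot // Hlou.
  + case: (FU x Hx) => -> H1.
    by rewrite Hlnu' // Hlot // Hlnu.
  + case: (FT x Hx) => -> H1.
    by rewrite Hlou' // Hlnt' // Hlnt.
- move=> y z /Hcl [[Hy Hyt]|[x Hx ->]|[x Hx ->]] /Hcl [[Hz Hzt]|[x' Hx' ->]|[x' Hx' ->]].
  + case: (FO y Hy Hyt) => -> H1 H2 H3; case: (FO z Hz Hzt) => -> H4 H5 H6.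
    by rewrite Hpou' // Hpot' // Hpot // Hpou.
  + case: (FO y Hy Hyt) => -> H1 H2 H3; case: (FU x' Hx') => -> H4.
    by rewrite (Xu' _ _ Hx' H3).2 Hpot' // Hpot // (Xu _ _ Hx' Hy).2.
  + case: (FO y Hy Hyt) => -> H1 H2 H3; case: (FT x' Hx') => -> H4.
    by rewrite Hpou' // (Xt' _ _ Hx' H2).2 (Xt _ _ Hx' H1).2 Hpou.
  + case: (FU x Hx) => -> H1; case: (FO z Hz Hzt) => -> H4 H5 H6.
    by rewrite (Xu' _ _ Hx H6).1 Hpot' // Hpot // (Xu _ _ Hx Hz).1.
  + case: (FU x Hx) => -> H1; case: (FU x' Hx') => -> H4.
    by rewrite Hpnu' // Hpot // Hpnu.
  + case: (FU x Hx) => -> H1; case: (FT x' Hx') => -> H4.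
    by rewrite (Xu' _ _ Hx H4).1 (Xt' _ _ Hx' HuAt).2 (Xt _ _ Hx' H1).2 (Xu _ _ Hx HtAu).1.
  + case: (FT x Hx) => -> H1; case: (FO z Hz Hzt) => -> H4 H5 H6.
    by rewrite Hpou' // (Xt' _ _ Hx H5).1 (Xt _ _ Hx H4).1 Hpou.
  + case: (FT x Hx) => -> H1; case: (FU x' Hx') => -> H4.
    by rewrite (Xu' _ _ Hx' H1).2 (Xt' _ _ Hx HuAt).1 (Xt _ _ Hx H4).1 (Xu _ _ Hx' HtAu).2.
  + case: (FT x Hx) => -> H1; case: (FT x' Hx') => -> H4.
    by rewrite Hpou' // Hpnt' // Hpnt.
Qed.

End Swap.


Lemma In_max (T : Type) (F : T -> nat) (s : seq T) x :
  List.In x s -> F x <= \max_(y <- s) F y.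
Proof.
elim: s => [//|z s IH] /= [->|H]; rewrite big_cons.
  exact: leq_maxl.
exact: leq_trans (IH H) (leq_maxr _ _).
Qed.

Lemma In_catl (T : Type) (s1 s2 : seq T) x : List.In x s1 -> List.In x (s1 ++ s2).
Proof. elim: s1 => [//|z s IH] /= [->|H]; [by left|by right; apply: IH]. Qed.

Lemma In_catr (T : Type) (s1 s2 : seq T) x : List.In x s2 -> List.In x (s1 ++ s2).
Proof. elim: s1 => [//|z s IH] /= H; by right; apply: IH. Qed.

Lemma In_split' (T : Type) (s : seq T) x : List.In x s -> exists s1 s2, s = s1 ++ x :: s2.
Proof.
elim: s => [//|z s IH] /= [->|H]; first by exists [::], s.
by have [s1 [s2 ->]] := IH H; exists (z :: s1), s2.
Qed.

Lemma In_nth' (T : Type) (x0 : T) (s : seq T) x : List.In x s -> exists2 i, i < size s & nth x0 s i = x.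
Proof.
elim: s => [//|z s IH] /= [->|H]; first by exists 0.
by have [i Hi Ei] := IH H; exists i.+1.
Qed.

Section Main.
Variables (A C : eqType) (M : seq (C * TN A C)).
Hypothesis wfM : forall m, List.In m M -> wf m.2.
Notation TNt := (TN A C).

Lemma reach_prim (a y : TNt) : primitive a -> reach M a y -> y = a.
Proof.
move=> Hp Hr; case: Hr Hp => [//|x t x1 x2 Hs _] /allP Hp.
case: (step_t Hs) => Ht Hc; by move: (Hp t Ht); rewrite Hc.
Qed.

Lemma extract (a y : TNt) t : uniq (tasks a) -> reach M a y -> primitive y ->
  t \in tasks a -> is_compound (lab a t) ->
  exists b y', [/\ step M a t b, reach M b y' & iso y y'].
Proof.
move=> Hu Hr; elim: Hr Hu t => [x|x u x1 x2 Hs Hr IH] Hu t Hy Ht Hc.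
  by move/allP: Hy => /(_ t Ht); rewrite Hc.
case: (eqVneq u t) => [Eut|Hut].
  subst u; exists x1, x2; split=> //; exact: iso_refl.
have Htu : t != u by rewrite eq_sym.
have [Ht1 Hl1] := step_keep Hs Ht Htu.
have Hu1 := step_uniq wfM Hu Hs.
have Hc1 : is_compound (lab x1 t) by rewrite Hl1.
have [b1 [y1 [Hs1 Hr1 Hi1]]] := IH Hu1 t Hy Ht1 Hc1.
case: (Hs) => cu [mu [fu Su]].
case: (Hs1) => ct [mt [ft St]].
have Hlt : lab x t = inr ct by rewrite -Hl1; case: St => [[]].
have Hint : List.In (ct, mt) M by case: St => [[]].
have [b [ft' St']] := step_exists Ht Hlt Hint.
have Hsb : step M x t b by exists ct, mt, ft'.
have Hua : u \in tasks x by case: Su => [[]].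
have [Hub Hlub] := step_keep Hsb Hua Hut.
have Hlu : lab b u = inr cu by rewrite Hlub; case: Su => [[]].
have Hinu : List.In (cu, mu) M by case: Su => [[]].
have [c [fu' Su']] := step_exists Hub Hlu Hinu.
have Hsc : step M b u c by exists cu, mu, fu'.
have Huc : uniq (tasks c) by apply: (step_uniq wfM _ Hsc); exact: (step_uniq wfM Hu Hsb).
have Hbc := swap Huc Htu Su St St' Su'.
have [y2 [Hr2 Hi2]] := reach_transfer wfM Hbc Huc Hr1.
exists b, y2; split=> //; first exact: reachS Hsc Hr2.
exact: iso_trans Hi1 Hi2.
Qed.

Definition valid (S : seq nat) (a : TNt) :=
  {in S, forall t, t \in tasks a /\ is_compound (lab a t)}.

Lemma valid_step S t (a b : TNt) : valid (t :: S) a -> uniq (t :: S) -> step M a t b -> valid S b.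
Proof.
move=> Hv /andP[HtS _] Hs s Hs'.
have Hst : s != t by apply: contraNneq HtS => <-.
have [H1 H2] : s \in tasks a /\ is_compound (lab a s) by apply: Hv; rewrite inE Hs' orbT.
by have [-> ->] := step_keep Hs H1 Hst.
Qed.

Lemma lemmaR S (a y : TNt) : uniq S -> valid S a -> uniq (tasks a) -> reach M a y -> primitive y ->
  exists x y', [/\ levelR M S a x, reach M x y' & iso y y'].
Proof.
elim: S a y => [|t S IH] a y HS Hv Hu Hr Hp.
  by exists a, y; split=> //; [exact: levelR0 | exact: iso_refl].
have [Ht Hc] := Hv t (mem_head _ _).
have [b [y1 [Hs Hr1 Hi1]]] := extract Hu Hr Hp Ht Hc.
have Hvb := valid_step Hv HS Hs.
have [x [y' [Hl Hr' Hi']]] := IH b y1 (proj2 (andP HS)) Hvb (step_uniq wfM Hu Hs) Hr1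
  (iso_primitive Hi1 Hp).
exists x, y'; split=> //; first exact: levelRS Hs Hl.
exact: iso_trans Hi1 Hi'.
Qed.

Lemma Cs_ge c m : List.In (c, m) M -> size (tasks m) <= Cs M.
Proof. by move=> H; apply: (In_max (fun p => size (tasks p.2)) H). Qed.

Lemma step_count (a b : TNt) t : uniq (tasks a) -> step M a t b ->
  exists2 k, k <= Cs M &
  size (tasks b) + 1 = size (tasks a) + k /\ Cnum b + 1 <= Cnum a + k.
Proof.
move=> Hu [c [m [f [[Ht Hl Hin Hinj Hfr] [[Hp [Hlo Hln] _ _] _]]]]].
exists (size (tasks m)); first exact: Cs_ge Hin.
have Eo : [seq y <- tasks a | y != t] = rem t (tasks a) by rewrite rem_filter.
have Pa := perm_to_rem Ht.
split.
  by rewrite (perm_size Hp) size_cat size_map Eo (perm_size Pa) /=; lia.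
rewrite /Cnum /compound_tasks !size_filter.
rewrite ((permP Hp) (fun x => is_compound (lab b x))) count_cat.
rewrite ((permP Pa) (fun x => is_compound (lab a x))) /= Hl /=.
have -> : count (fun x => is_compound (lab b x)) [seq y <- tasks a | y != t] =
          count (fun x => is_compound (lab a x)) (rem t (tasks a)).
  by rewrite -Eo; apply: eq_in_count => y Hy; rewrite Hlo.
have := count_size (fun x => is_compound (lab b x)) [seq f i | i <- tasks m].
rewrite size_map; move: (count _ (rem _ _)) (count _ (map _ _)) => u v; lia.
Qed.

Lemma levelR_count S (a x : TNt) : uniq (tasks a) -> levelR M S a x ->
  exists N, [/\ N <= size S * Cs M, size (tasks x) + size S = size (tasks a) + N,
     Cnum x + size S <= Cnum a + N & uniq (tasks x)].
Proof.
move=> Hu Hl; elim: Hl Hu => [b|t S0 b b1 b2 Hs Hl IH] Hu.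
  by exists 0; split=> //; rewrite !addn0.
have [k Hk [E1 E2]] := step_count Hu Hs.
have [N [H1 H2 H3 H4]] := IH (step_uniq wfM Hu Hs).
exists (k + N); split=> //=; try lia.
Qed.

End Main.


Section Reps.
Variables (A C : eqType).
Notation TNt := (TN A C).

Lemma iso_reps_cover (s : seq TNt) x : List.In x s -> exists y, List.In y (iso_reps s) /\ iso x y.
Proof.
elim: s => [//|z s IH] /= Hx.
case: excluded_middle_informative => [[y [Hy Hi]]|Hn].
  case: Hx => [<-|Hx]; first by exists y.
  exact: IH.
case: Hx => [<-|Hx]; first by exists z; split; [left|exact: iso_refl].
by have [y [Hy Hi]] := IH Hx; exists y; split; [right|].
Qed.

Lemma iso_reps_sub (s : seq TNt) y : List.In y (iso_reps s) -> List.In y s.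
Proof.
elim: s => [//|z s IH] /=.
case: excluded_middle_informative => [e|e] H; first by right; apply: IH.
by case: H => [->|H]; [left|right; apply: IH].
Qed.

End Reps.

Section Count.
Variables (A C : eqType) (M : seq (C * TN A C)).
Hypothesis wfM : forall m, List.In m M -> wf m.2.
Notation TNt := (TN A C).

Lemma In_meth c m : List.In m [seq p.2 | p <- M & p.1 == c] -> List.In (c, m) M.
Proof.
elim: M => [//|[c' m'] N IH] /=.
case: eqP => [->|_] /=; last by move=> H; right; apply: IH.
by case=> [->|H]; [left|right; apply: IH].
Qed.

Lemma meth_In c m : List.In (c, m) M -> List.In m [seq p.2 | p <- M & p.1 == c].
Proof.
elim: M => [//|[c' m'] N IH] /= [[-> ->]|H]; first by rewrite eqxx; left.
case: eqP => _ /=; [right|]; exact: IH.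
Qed.

Lemma build_steps (a : TNt) t c (R : seq TNt) : t \in tasks a -> lab a t = inr c ->
  (forall m, List.In m R -> List.In (c, m) M) ->
  exists R' : seq TNt, [/\ size R' = size R, forall r, List.In r R' -> step M a t r &
     forall m, List.In m R -> exists r f, List.In r R' /\ stepw M a t r c m f].
Proof.
move=> Ht Hl; elim: R => [|m R IH] HR; first by exists [::].
have [R' [E1 E2 E3]] : exists R' : seq TNt, [/\ size R' = size R, forall r, List.In r R' -> step M a t r &
     forall m, List.In m R -> exists r f, List.In r R' /\ stepw M a t r c m f].
  by apply: IH => m' H; apply: HR; right.
have [b [f Sb]] := step_exists Ht Hl (HR m (or_introl erefl)).
exists (b :: R'); split=> /=; first by rewrite E1.
  by move=> r [<-|H]; [exists c, m, f|apply: E2].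
move=> m' [<-|H]; first by exists b, f; split=> //; left.
by have [r [f' [H1 H2]]] := E3 m' H; exists r, f'; split=> //; right.
Qed.

Lemma step_reps (a : TNt) t : uniq (tasks a) -> t \in tasks a -> is_compound (lab a t) ->
  exists R : seq TNt, [/\ size R <= Cc M, forall r, List.In r R -> step M a t r &
    forall b, step M a t b -> exists r, List.In r R /\ iso b r].
Proof.
move=> Hu Ht; case El: (lab a t) => [//|c] _.
set Ms := [seq p.2 | p <- M & p.1 == c].
have HR m : List.In m (iso_reps Ms) -> List.In (c, m) M.
  by move=> /iso_reps_sub /In_meth.
have [R [E1 E2 E3]] := build_steps Ht El HR.
exists R; split=> //.
- rewrite E1; case Er: (iso_reps Ms) => [//|m0 r0].
  have := HR m0; rewrite Er => /(_ (or_introl erefl)) Hin.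
  rewrite -Er.
  exact: (In_max (fun mc => nclasses [seq m.2 | m <- M & m.1 == mc.1]) Hin).
- move=> b [c' [m' [f' Sb]]].
  have Ec : c' = c by case: Sb => [[_ Hl' _ _ _] _]; move: Hl'; rewrite El => -[].
  subst c'.
  have Hin : List.In (c, m') M by case: Sb => [[]].
  have [m [Hm [h Hh]]] := iso_reps_cover (meth_In Hin).
  have [r [f [Hr Sr]]] := E3 m Hm.
  exists r; split=> //.
  exact: (core (isow_id a) Hh (stepw_uniq wfM Hu Sr) Sb Sr).
Qed.

End Count.


Section Final.
Variables (A C : eqType) (M : seq (C * TN A C)).
Hypothesis wfM : forall m, List.In m M -> wf m.2.
Notation TNt := (TN A C).

Definition cover (a : TNt) (L : seq TNt) :=
  forall y, reach M a y -> primitive y -> exists z, List.In z L /\ iso y z.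

Definition E d n := \sum_(0 <= i < d) n * Cs M ^ i.

Definition Q d := forall (a : TNt) n, uniq (tasks a) -> Cnum a <= n -> Dle M a d ->
  exists L : seq TNt, size L <= Cc M ^ E d n /\ cover a L.

Lemma gather (R : seq TNt) B :
  (forall r, List.In r R -> exists L : seq TNt, size L <= B /\ cover r L) ->
  exists L : seq TNt, size L <= size R * B /\ forall r, List.In r R -> cover r L.
Proof.
elim: R => [|r R IH] H; first by exists [::].
have [L1 [H1 C1]] := H r (or_introl erefl).
have [L2 [H2 C2]] : exists L : seq TNt, size L <= size R * B /\ forall r, List.In r R -> cover r L.
  by apply: IH => r' Hr'; apply: H; right.
exists (L1 ++ L2); split; first by rewrite size_cat mulSn leq_add.
move=> r' [<-|Hr'] y Hr Hp.
  by have [z [Hz Hi]] := C1 y Hr Hp; exists z; split=> //; apply: In_catl.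
by have [z [Hz Hi]] := C2 r' Hr' y Hr Hp; exists z; split=> //; apply: In_catr.
Qed.

Lemma inner d : 0 < Cc M -> Q d -> forall S (a : TNt) n, uniq S -> valid S a -> uniq (tasks a) ->
  Cnum a + size S * Cs M <= n + size S -> (forall x, levelR M S a x -> Dle M x d) ->
  exists L : seq TNt, size L <= Cc M ^ (size S + E d n) /\ cover a L.
Proof.
move=> Cpos Qd; elim=> [|t S IH] a n HS Hv Hu Hn HD.
  have Hn' : Cnum a <= n by move: Hn; rewrite !addn0.
  have [L [H1 H2]] := Qd a n Hu Hn' (HD a (levelR0 _ _)).
  by exists L; rewrite add0n.
have [Ht Hc] := Hv t (mem_head _ _).
have [R [HR1 HR2 HR3]] := step_reps wfM Hu Ht Hc.
have [L [HL1 HL2]] : exists L : seq TNt, size L <= size R * Cc M ^ (size S + E d n) /\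
    forall r, List.In r R -> cover r L.
  apply: gather => r Hr.
  have Hs := HR2 r Hr.
  have [k Hk [_ E2]] := step_count Hu Hs.
  have HS' : uniq S by case/andP: HS.
  have Hv' := valid_step Hv HS Hs.
  have Hu' := step_uniq wfM Hu Hs.
  have Hn' : Cnum r + size S * Cs M <= n + size S by move: Hn; rewrite /= mulSn; nia.
  have HD' : forall x, levelR M S r x -> Dle M x d.
    by move=> x Hx; apply: HD; exact: levelRS Hs Hx.
  exact: IH r n HS' Hv' Hu' Hn' HD'.
exists L; split.
  apply: (leq_trans HL1); rewrite /= addSn expnS leq_mul2r HR1 orbT //.
move=> y Hr Hp.
have [b [y1 [Hs Hr1 Hi1]]] := extract wfM Hu Hr Hp Ht Hc.
have [r [Hr' Hbr]] := HR3 b Hs.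
have Hur : uniq (tasks r) := step_uniq wfM Hu (HR2 r Hr').
have [y2 [Hr2 Hi2]] := reach_transfer wfM Hbr Hur Hr1.
have Hp2 : primitive y2 := iso_primitive Hi2 (iso_primitive Hi1 Hp).
have [z [Hz Hiz]] := HL2 r Hr' y2 Hr2 Hp2.
by exists z; split=> //; apply: iso_trans Hi1 (iso_trans Hi2 Hiz).
Qed.

Lemma compound_valid (a : TNt) : valid (compound_tasks a) a.
Proof. by move=> t; rewrite mem_filter => /andP[]. Qed.

Lemma Q0 : Q 0.
Proof.
move=> a n Hu Hn Hp; exists [:: a]; split; first by rewrite /E big_geq.
move=> y Hr _; rewrite (reach_prim Hp Hr); exists a; split; [left|exact: iso_refl] => //.
Qed.

Lemma QS d : 0 < Cc M -> Q d -> Q d.+1.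
Proof.
move=> Cpos Qd a n Hu Hn HD.
have Hfu : uniq (compound_tasks a) by apply: filter_uniq.
have Hb : Cnum a + size (compound_tasks a) * Cs M <= n * Cs M + size (compound_tasks a).
  by rewrite -/(Cnum a) addnC leq_add2r leq_mul2r Hn orbT.
have [L [H1 H2]] := inner Cpos Qd Hfu (compound_valid (a:=a)) Hu Hb HD.
exists L; split=> //; apply: leq_trans H1 _; rewrite leq_pexp2l //.
rewrite /E big_nat_recl // expn0 muln1 -/(Cnum a); apply: leq_add => //.
by rewrite leq_eqVlt; apply/orP; left; apply/eqP; apply: eq_bigr => i _; rewrite expnS mulnA.
Qed.

End Final.


Section Final2.
Variables (A C : eqType) (M : seq (C * TN A C)).
Hypothesis wfM : forall m, List.In m M -> wf m.2.
Notation TNt := (TN A C).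

Lemma Qall d : 0 < Cc M -> Q M d.
Proof. by move=> Cpos; elim: d => [|d IH]; [exact: Q0|exact: QS]. Qed.

Lemma size_thm d : forall (a y : TNt), uniq (tasks a) -> Dle M a d -> reach M a y -> primitive y ->
  size (tasks y) + Cnum a <= size (tasks a) + Cnum a * Cs M ^ d.
Proof.
elim: d => [|d IH] a y Hu HD Hr Hp.
  by rewrite (reach_prim HD Hr) expn0 muln1.
have Hfu : uniq (compound_tasks a) by apply: filter_uniq.
have [x [y' [Hl Hr' Hi]]] := lemmaR wfM Hfu (compound_valid (a:=a)) Hu Hr Hp.
have [N [H1 H2 H3 H4]] := levelR_count wfM Hu Hl.
have HDx : Dle M x d := HD x Hl.
have Hp' := iso_primitive Hi Hp.
have IHx := IH x y' H4 HDx Hr' Hp'.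
rewrite (iso_size Hi) expnS.
have HP : 0 < Cs M ^ d \/ Cs M = 0.
  by case: (posnP (Cs M)) => [->|h]; [right|left; rewrite expn_gt0 h].
move: H1 H2 H3 IHx HP; rewrite -/(Cnum a).
move: (Cs M) (Cs M ^ d) (Cnum a) (Cnum x) (size (tasks y')) (size (tasks x)) (size (tasks a)) => s P n cx sy sx sa.
move=> H1 H2 H3 IHx [HP|Hs0]; last first.
  subst s.
  have N0 : N = 0 by move: H1; rewrite muln0; lia.
  have C0 : cx = 0 by lia.
  by move: IHx; rewrite C0 !mul0n; lia.
have Hcx : cx <= N by lia.
have K1 : cx * P + (N - cx) <= N * P.
  have -> : N * P = cx * P + (N - cx) * P by rewrite -mulnDl subnKC.
  by rewrite leq_add2l leq_pmulr.
have K2 : N * P <= n * (s * P) by rewrite mulnA leq_mul2r H1 orbT.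
lia.
Qed.

Lemma pigeon (x0 : TNt) (s L : seq TNt) :
  (forall x, List.In x s -> exists z, List.In z L /\ iso x z) -> pairwise_noniso s ->
  size s <= size L.
Proof.
move=> Hc Hpw.
suff : forall I : seq nat, uniq I ->
   (forall x, List.In x s -> exists2 i, i \in I & iso x (nth x0 L i)) -> size s <= size I.
  move=> /(_ (iota 0 (size L)) (iota_uniq _ _)); rewrite size_iota; apply.
  move=> x Hx; have [z [Hz Hi]] := Hc x Hx.
  have [i Hi1 Ei] := In_nth' x0 Hz.
  by exists i; [rewrite mem_iota|rewrite Ei].
clear Hc; elim: s Hpw => [|x s IH] Hpw I HI Hc //=.
have [i Hi Hxi] := Hc x (or_introl erefl).
have Hpw' : pairwise_noniso s.
  by move=> s1 s2 s3 x' y' E; apply: (Hpw (x :: s1) s2 s3); rewrite E.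
have Hsz : size (rem i I) = (size I).-1 := size_rem Hi.
have : size s <= size (rem i I).
  apply: IH => //; first exact: rem_uniq.
  move=> y Hy; have [j Hj Hyj] := Hc y (or_intror Hy).
  exists j => //; rewrite (mem_rem_uniq _ HI) inE Hj andbT.
  apply/eqP => Eji; subst j.
  have [s2 [s3 Es]] := In_split' Hy.
  apply: (Hpw [::] s2 s3 x y); first by rewrite Es.
  exact: iso_trans Hxi (iso_sym Hyj).
have Hpos : 0 < size I by move: Hi; case: (I).
rewrite Hsz; lia.
Qed.

End Final2.


Lemma prim_Cnum (A C : eqType) (a : TN A C) : primitive a -> Cnum a = 0.
Proof.
move=> Hp; apply/eqP; rewrite /Cnum /compound_tasks size_filter -leqn0 leqNgt -has_count -all_predC.
exact: Hp.
Qed.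

Lemma In_size_pos (T : Type) (l : seq T) y : List.In y l -> 0 < size l.
Proof. by case: l. Qed.

Lemma Cc_pos (A C : eqType) (M : seq (C * TN A C)) p : List.In p M -> 0 < Cc M.
Proof.
move=> Hp; apply: leq_trans _ (In_max (fun mc => nclasses [seq m.2 | m <- M & m.1 == mc.1]) Hp).
case: p Hp => c m Hp /=.
have [y [Hy _]] := iso_reps_cover (meth_In Hp).
exact: In_size_pos Hy.
Qed.

Theorem lemma1 (A C : eqType) (M : seq (C * TN A C)) (tn : TN A C) (d : nat) :
  (forall m, List.In m M -> wf m.2) ->
  wf tn ->
  is_Cd M tn d ->
  (forall s : seq (TN A C),
      (forall x, List.In x s -> decomposes_to M tn x) ->
      pairwise_noniso s ->
      size s <= Cc M ^ (\sum_(0 <= i < d) Cnum tn * Cs M ^ i))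
  /\
  (forall tn' : TN A C, decomposes_to M tn tn' ->
      ((size (tasks tn'))%:Z <=
       (size (tasks tn))%:Z + (Cnum tn)%:Z * ((Cs M)%:Z ^+ d - 1))%R).
Proof.
move=> wfM Hwf [HD _]; have Hu := proj1 Hwf.
split.
- move=> s Hs Hpw.
  case: (posnP (Cc M)) => [Cc0|Cpos]; last first.
    have [L [HL Hcov]] := Qall wfM (d:=d) Cpos Hu (leqnn _) HD.
    apply: leq_trans HL.
    apply: (pigeon tn _ Hpw) => x Hx.
    by case: (Hs x Hx) => Hr Hp; apply: Hcov.
  have HM p : ~ List.In p M.
    by move=> Hp; move: (Cc_pos Hp); rewrite Cc0.
  have Hre y : reach M tn y -> y = tn.
    case=> // x t x1 x2 [c [m [f [[_ _ Hin _ _] _]]]]; by case: (HM _ Hin).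
  have Hcov x : List.In x s -> exists z, List.In z [:: tn] /\ iso x z.
    move=> Hx; case: (Hs x Hx) => Hr _; rewrite (Hre x Hr).
    by exists tn; split; [left|exact: iso_refl].
  have Hle := pigeon tn Hcov Hpw.
  case: s Hs Hle Hpw Hcov => [|x s'] Hs Hle _ _ //.
  case: (Hs x (or_introl erefl)) => Hr Hp.
  move: Hp; rewrite (Hre x Hr) => /prim_Cnum ->.
  by rewrite big1 // => i _; rewrite mul0n.
- move=> y [Hr Hp].
  have H := size_thm wfM Hu HD Hr Hp.
  have E : ((Cs M)%:Z ^+ d = (Cs M ^ d)%N%:Z)%R by rewrite -!natz natrX.
  rewrite E mulrBr mulr1 -PoszM.
  move: H; move: (size (tasks y)) (size (tasks tn)) (Cnum tn * Cs M ^ d) (Cnum tn) => a b c e.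
  lia.
Qed.
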